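(* Let $(m_j)_{j=1}^{\infty}$ be a strictly increasing sequence of positive integers with $m_{j+1}\ge q\,m_j$ for all $j$, where $q\ge 2$. Let $A_j>0$, $B_j\in\mathbb{C}$ with $A_j^2-|B_j|^2=1$. For $N\in\mathbb{N}$ define trigonometric polynomials $a_N,b_N$ by $$\begin{bmatrix} a_N(t) & b_N(t)\\ \overline{b_N(t)} & \overline{a_N(t)}\end{bmatrix}=\prod_{j=1}^{N}\begin{bmatrix} A_j & B_j e^{2\pi i m_j t}\\ \overline{B_j}e^{-2\pi i m_j t} & A_j\end{bmatrix}$$ (factors in increasing order of $j$ from left to right). Then (a) $\displaystyle\int_{\mathbb{T}}\big(|a_N(t)|^2+|b_N(t)|^2\big)\,dt=\prod_{j=1}^{N}(A_j^2+|B_j|^2)$; (b) $\displaystyle\int_{\mathbb{T}}\big(|a_N(t)-A_1\cdots A_N|^2+|b_N(t)|^2\big)\,dt=\prod_{j=1}^{N}(A_j^2+|B_j|^2)-\prod_{j=1}^{N}A_j^2$.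
   Context: $\mathbb{T}=\mathbb{R}/\mathbb{Z}$ with Lebesgue measure. *)

(* Defs.v *)
From Stdlib Require Import Reals.
From Coquelicot Require Import Coquelicot.
Open Scope R_scope.

Definition expi (theta : R) : C := (cos theta, sin theta).

Record M2 := mkM2 { m11 : C; m12 : C; m21 : C; m22 : C }.

Definition M2id : M2 := mkM2 1%C 0%C 0%C 1%C.

Definition M2mul (X Y : M2) : M2 :=
  mkM2 (m11 X * m11 Y + m12 X * m21 Y)%C (m11 X * m12 Y + m12 X * m22 Y)%C
       (m21 X * m11 Y + m22 X * m21 Y)%C (m21 X * m12 Y + m22 X * m22 Y)%C.

Definition factor (m : nat -> nat) (A : nat -> R) (B : nat -> C) (j : nat) (t : R) : M2 :=
  mkM2 (RtoC (A j)) (B j * expi (2 * PI * INR (m j) * t))%C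
       (Cconj (B j) * expi (- (2 * PI * INR (m j) * t)))%C (RtoC (A j)).

Fixpoint Mprod (m : nat -> nat) (A : nat -> R) (B : nat -> C) (N : nat) (t : R) : M2 :=
  match N with
  | O => M2id
  | S n => M2mul (Mprod m A B n t) (factor m A B (S n) t)
  end.

Definition a_N m A B N t : C := m11 (Mprod m A B N t).
Definition b_N m A B N t : C := m12 (Mprod m A B N t).

Fixpoint prodR (f : nat -> R) (N : nat) : R :=
  match N with
  | O => 1
  | S n => prodR f n * f (S n)
  end.

(* Main.v *)
Require Import Defs.
From Stdlib Require Import Reals Lia ZArith List Nsatz Lra.
From Coquelicot Require Import Coquelicot.
Open Scope R_scope.

Definition tp := list (Z * C).
Fixpoint ev (p : tp) (t : R) : C :=
  match p with nil => 0%C | (k, c) :: p' => (c * expi (2 * PI * IZR k * t) + ev p' t)%C end.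
Fixpoint c0 (p : tp) : C :=
  match p with nil => 0%C | (k, c) :: p' => if Z.eq_dec k 0 then (c + c0 p')%C else c0 p' end.
Definition scl (z : C) (p : tp) : tp := map (fun kc => (fst kc, (z * snd kc)%C)) p.
Definition mul1 (kc : Z * C) (q : tp) : tp := map (fun ld => (fst kc + fst ld, (snd kc * snd ld)%C)%Z) q.
Fixpoint mul (p q : tp) : tp := match p with nil => nil | kc :: p' => mul1 kc q ++ mul p' q end.
Definition cj (p : tp) : tp := map (fun kc => (- fst kc, Cconj (snd kc)))%Z p.

Lemma expi_plus x y : expi (x + y) = (expi x * expi y)%C.
Proof. unfold expi, Cmult; simpl. rewrite cos_plus; rewrite sin_plus. f_equal; ring. Qed.
Lemma expi_opp x : expi (- x) = Cconj (expi x).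
Proof. unfold expi, Cconj; simpl. rewrite cos_neg, sin_neg. reflexivity. Qed.

Lemma ev_app p q t : ev (p ++ q) t = (ev p t + ev q t)%C.
Proof. induction p as [|[k c] p IH]; simpl. ring. rewrite IH. ring. Qed.
Lemma ev_scl z p t : ev (scl z p) t = (z * ev p t)%C.
Proof. induction p as [|[k c] p IH]; simpl. ring. rewrite IH. ring. Qed.
Lemma ev_mul1 k c q t : ev (mul1 (k, c) q) t = (c * expi (2 * PI * IZR k * t) * ev q t)%C.
Proof. induction q as [|[l d] q IH]; simpl. ring. rewrite IH, plus_IZR.
  replace (2 * PI * (IZR k + IZR l) * t) with (2 * PI * IZR k * t + 2 * PI * IZR l * t) by ring.
  rewrite expi_plus. ring. Qed.
Lemma ev_mul p q t : ev (mul p q) t = (ev p t * ev q t)%C.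
Proof. induction p as [|[k c] p IH]; simpl. ring. rewrite ev_app, ev_mul1, IH. ring. Qed.
Lemma ev_cj p t : ev (cj p) t = Cconj (ev p t).
Proof. induction p as [|[k c] p IH]; simpl. unfold Cconj, RtoC; simpl; f_equal; ring.
  rewrite IH, opp_IZR. replace (2 * PI * - IZR k * t) with (- (2 * PI * IZR k * t)) by ring.
  rewrite expi_opp. rewrite Cplus_conj, Cmult_conj. reflexivity. Qed.

Lemma c0_app p q : c0 (p ++ q) = (c0 p + c0 q)%C.
Proof. induction p as [|[k c] p IH]; simpl. ring. destruct Z.eq_dec; rewrite IH; ring. Qed.
Lemma c0_scl z p : c0 (scl z p) = (z * c0 p)%C.
Proof. induction p as [|[k c] p IH]; simpl. ring. destruct Z.eq_dec; rewrite IH; ring. Qed.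
Lemma c0_nz p : List.Forall (fun kc : Z * C => ~ (fst kc = 0%Z)) p -> c0 p = 0%C.
Proof. induction p as [|[k c] p IH]; simpl; intros H. auto. inversion H; subst.
  destruct Z.eq_dec. simpl in *; lia. auto. Qed.

Lemma F_scl P z p : List.Forall (fun kc => P (fst kc)) p -> List.Forall (fun kc => P (fst kc)) (scl z p).
Proof. intros H; unfold scl; rewrite Forall_map; eapply Forall_impl; [|exact H]; simpl; auto. Qed.
Lemma F_mul (P Q S : Z -> Prop) p q : (forall x y, P x -> Q y -> S (x + y)%Z) ->
  List.Forall (fun kc => P (fst kc)) p -> List.Forall (fun kc => Q (fst kc)) q -> List.Forall (fun kc => S (fst kc)) (mul p q).
Proof. intros HS Hp Hq; induction Hp as [|[k c] p Hk Hp IH]; simpl. constructor.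
  apply Forall_app; split; auto. unfold mul1; rewrite Forall_map.
  eapply Forall_impl; [|exact Hq]; simpl; auto. Qed.
Lemma F_cj (P : Z -> Prop) p : List.Forall (fun kc => P (fst kc)) p -> List.Forall (fun kc => P (- fst kc)%Z) (cj p).
Proof. intros H; unfold cj; rewrite Forall_map; eapply Forall_impl; [|exact H]; intros [k c] Hk; simpl in *; rewrite Z.opp_involutive; auto. Qed.

Lemma IZR_2k k : 2 * PI * IZR k * 1 = 2 * (IZR k * PI).
Proof. ring. Qed.

Lemma RInt_c01 (v : R) : is_RInt (fun _ => v) 0 1 v.
Proof. assert (H := is_RInt_const 0 1 v). unfold scal in H; simpl in H; unfold mult in H; simpl in H.
  replace ((1 - 0) * v) with v in H by ring. exact H. Qed.

Lemma int_term (k : Z) (c : C) :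
  is_RInt (fun t => Re (c * expi (2 * PI * IZR k * t))%C) 0 1 (if Z.eq_dec k 0 then Re c else 0).
Proof.
  destruct Z.eq_dec as [->|Hk].
  - eapply is_RInt_ext; [|apply (RInt_c01 (Re c))].
    intros x _. unfold expi, Re, Cmult; simpl. rewrite Rmult_0_r, Rmult_0_l, cos_0, sin_0.
    ring.
  - set (w := 2 * PI * IZR k).
    assert (Hw : w <> 0). { unfold w. apply Rmult_integral_contrapositive; split.
      apply Rmult_integral_contrapositive; split; [lra| apply PI_neq0]. apply not_0_IZR; auto. }
    assert (E := is_RInt_derive (fun t => (fst c * sin (w * t) + snd c * cos (w * t)) / w)
       (fun t => fst c * cos (w * t) - snd c * sin (w * t)) 0 1).
    assert (Hs : sin (w * 1) = 0). { apply sin_eq_0_1. exists (2 * k)%Z. unfold w. rewrite mult_IZR. ring. }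
    assert (Hc : cos (w * 1) = 1). { replace (w * 1) with (2 * (IZR k * PI)) by (unfold w; ring).
      rewrite cos_2a_sin. rewrite sin_eq_0_1. ring. exists k; auto. }
    assert (E2 : is_RInt (fun t => fst c * cos (w * t) - snd c * sin (w * t)) 0 1
      (minus ((fun t => (fst c * sin (w * t) + snd c * cos (w * t)) / w) 1)
             ((fun t => (fst c * sin (w * t) + snd c * cos (w * t)) / w) 0))).
    { apply E.
      + intros x _. auto_derive; auto. field. auto.
      + intros x _. apply (ex_derive_continuous (K:=R_AbsRing) (V:=R_NormedModule)). auto_derive; auto. }
    eapply is_RInt_ext; [| refine (eq_ind _ (fun l => is_RInt _ 0 1 l) E2 _ _)].
    + intros x _. unfold expi, Re, Cmult; simpl. fold w. ring.
    + rewrite Hs, Hc, !Rmult_0_r, sin_0, cos_0. unfold minus, plus, opp; simpl. field. auto.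
Qed.

Lemma RInt_plusR (f g : R -> R) a b : is_RInt f 0 1 a -> is_RInt g 0 1 b ->
  is_RInt (fun t => f t + g t) 0 1 (a + b).
Proof. intros Ha Hb. exact (is_RInt_plus (V:=R_NormedModule) f g 0 1 a b Ha Hb). Qed.
Lemma RInt_scalR (f : R -> R) k a : is_RInt f 0 1 a ->
  is_RInt (fun t => k * f t) 0 1 (k * a).
Proof. intros Ha. exact (is_RInt_scal (V:=R_NormedModule) f 0 1 k a Ha). Qed.
Lemma RInt_eqv (f g : R -> R) a b : is_RInt f 0 1 a -> (forall t, f t = g t) -> a = b -> is_RInt g 0 1 b.
Proof. intros H E ->. eapply is_RInt_ext; [|exact H]. intros; auto. Qed.

Lemma int_ev p : is_RInt (fun t => Re (ev p t)) 0 1 (Re (c0 p)).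
Proof.
  induction p as [|[k c] p IH]; simpl.
  - eapply is_RInt_ext; [|apply (RInt_c01 0)]. intros; simpl. reflexivity.
  - eapply RInt_eqv; [apply RInt_plusR; [apply int_term | apply IH]| |].
    + intros t. simpl. reflexivity.
    + destruct Z.eq_dec; destruct c, (c0 p); unfold Re; simpl; ring.
Qed.

Lemma Cmod2 z : Cmod z ^ 2 = fst z ^ 2 + snd z ^ 2.
Proof. unfold Cmod. rewrite pow2_sqrt; auto. apply Rplus_le_le_0_compat; apply pow2_ge_0. Qed.

Lemma alg (A : R) (B a b : C) (x : R) :
  Cmod (a * RtoC A + b * (Cconj B * expi (- x)))%C ^ 2 + Cmod (a * (B * expi x) + b * RtoC A)%C ^ 2
  = (A ^ 2 + Cmod B ^ 2) * (Cmod a ^ 2 + Cmod b ^ 2) + 4 * A * Re (B * expi x * (a * Cconj b))%C.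
Proof.
  rewrite !Cmod2. rewrite expi_opp. assert (H := sin2_cos2 x). unfold Rsqr in H.
  destruct a as [a1 a2], b as [b1 b2], B as [B1 B2]. unfold expi, Cconj, Cmult, Cplus, RtoC, Re; simpl.
  set (c := cos x) in *. set (s := sin x) in *.
  nsatz.
Qed.

Section Main.
Variables (m : nat -> nat) (A : nat -> R) (B : nat -> C).
Definition fm j : Z := Z.of_nat (m j).

Fixpoint pab (n : nat) : tp * tp :=
  match n with
  | O => ((0%Z, RtoC 1) :: nil, nil)
  | S n' => let P := pab n' in
      (scl (RtoC (A (S n'))) (fst P) ++ mul (((- fm (S n'))%Z, Cconj (B (S n'))) :: nil) (snd P),
       mul ((fm (S n'), B (S n')) :: nil) (fst P) ++ scl (RtoC (A (S n'))) (snd P))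
  end.

Lemma ev_single k c t : ev ((k, c) :: nil) t = (c * expi (2 * PI * IZR k * t))%C.
Proof. simpl. ring. Qed.

Lemma ev_pab n t : a_N m A B n t = ev (fst (pab n)) t /\ b_N m A B n t = ev (snd (pab n)) t.
Proof.
  induction n as [|n IH].
  - unfold a_N, b_N; simpl. split.
    + replace (2 * PI * IZR 0 * t) with 0 by ring. unfold expi. rewrite cos_0, sin_0. unfold Cmult, Cplus, RtoC; simpl. f_equal; ring.
    + reflexivity.
  - destruct IH as [Ha Hb]. unfold a_N, b_N in *. simpl. rewrite Ha, Hb.
    rewrite !ev_app, !ev_scl, !ev_mul1. simpl ev. unfold fm. rewrite opp_IZR, <- !INR_IZR_INZ.
        replace (2 * PI * - INR (m (S n)) * t) with (- (2 * PI * INR (m (S n)) * t)) by ring.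
    split; ring.
Qed.

Definition Ua n : Z := match n with O => 1%Z | S _ => fm n end.
Definition Ub n : Z := match n with O => 0%Z | S _ => fm n end.

Lemma inv n (Hb : forall n, (Ub n < fm (S n))%Z) (Hab : forall n, (Ua n <= fm (S n))%Z) :
  List.Forall (fun kc => (- Ua n < fst kc <= 0)%Z) (fst (pab n)) /\
  List.Forall (fun kc => (1 <= fst kc <= Ub n)%Z) (snd (pab n)).
Proof.
  induction n as [|n [IHa IHb]].
  - simpl. split; repeat constructor; simpl; lia.
  - specialize (Hb n). specialize (Hab n). cbn [pab fst snd]. split.
    + apply Forall_app; split.
      * apply (F_scl (fun k => (- Ua (S n) < k <= 0)%Z)). eapply Forall_impl; [|exact IHa].
        intros [k c]; simpl; lia.
      * apply (F_mul (fun k => k = (- fm (S n))%Z) (fun k => (1 <= k <= Ub n)%Z) (fun k => (- Ua (S n) < k <= 0)%Z)); auto.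
        -- intros x y -> Hy. simpl. lia.
        -- repeat constructor.
    + apply Forall_app; split.
      * apply (F_mul (fun k => k = fm (S n)) (fun k => (- Ua n < k <= 0)%Z) (fun k => (1 <= k <= Ub (S n))%Z)); auto.
        -- intros x y -> Hy. simpl. lia.
        -- repeat constructor.
      * apply (F_scl (fun k => (1 <= k <= Ub (S n))%Z)). eapply Forall_impl; [|exact IHb].
        intros [k c]; simpl; lia.
Qed.

Lemma c0_pab n (Hb : forall n, (Ub n < fm (S n))%Z) (Hab : forall n, (Ua n <= fm (S n))%Z) :
  c0 (fst (pab n)) = RtoC (prodR A n).
Proof.
  induction n as [|n IH].
  - simpl. try (destruct Z.eq_dec as [_|Hn]; [|congruence]). unfold RtoC, Cplus; simpl. f_equal; ring.
  - cbn [pab fst snd]. rewrite c0_app, c0_scl, IH, c0_nz.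
    + unfold RtoC, Cplus, Cmult; simpl. f_equal; ring.
    + destruct (inv n Hb Hab) as [_ IHb]. specialize (Hb n).
      apply (F_mul (fun k => k = (- fm (S n))%Z) (fun k => (1 <= k <= Ub n)%Z) (fun k => k <> 0%Z)).
      * intros x y -> Hy. lia.
      * repeat constructor.
      * exact IHb.
Qed.

Definition cr n := mul ((fm (S n), B (S n)) :: nil) (mul (fst (pab n)) (cj (snd (pab n)))).

Lemma cr_nz n (Hb : forall n, (Ub n < fm (S n))%Z) (Hab : forall n, (Ua n <= fm (S n))%Z)
  (Hs : forall n, (Ua n + Ub n <= fm (S n))%Z) :
  List.Forall (fun kc : Z * C => fst kc <> 0%Z) (cr n).
Proof.
  destruct (inv n Hb Hab) as [Ia Ib]. specialize (Hs n).
  unfold cr.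
  apply (F_mul (fun k => k = fm (S n)) (fun k => (- Ua n - Ub n < k <= -1)%Z) (fun k => k <> 0%Z)).
  - intros x y -> Hy. lia.
  - repeat constructor.
  - apply (F_mul (fun k => (- Ua n < k <= 0)%Z) (fun k => (- Ub n <= k <= -1)%Z) (fun k => (- Ua n - Ub n < k <= -1)%Z)).
    + intros x y Hx Hy. lia.
    + exact Ia.
    + eapply Forall_impl; [|apply (F_cj (fun k => (1 <= k <= Ub n)%Z)); exact Ib].
      intros [k c]; simpl; lia.
Qed.

Definition fN n t := Cmod (a_N m A B n t) ^ 2 + Cmod (b_N m A B n t) ^ 2.

Lemma int_fN n (Hb : forall n, (Ub n < fm (S n))%Z) (Hab : forall n, (Ua n <= fm (S n))%Z)
  (Hs : forall n, (Ua n + Ub n <= fm (S n))%Z) :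
  is_RInt (fN n) 0 1 (prodR (fun j => A j ^ 2 + Cmod (B j) ^ 2) n).
Proof.
  induction n as [|n IH].
  - eapply RInt_eqv; [apply (RInt_c01 1)| |reflexivity].
    intros t. unfold fN, a_N, b_N; simpl. rewrite Cmod_1, Cmod_0. ring.
  - eapply RInt_eqv; [apply RInt_plusR; [apply (RInt_scalR (fN n) (A (S n) ^ 2 + Cmod (B (S n)) ^ 2)), IH | apply (RInt_scalR (fun t => Re (ev (cr n) t)) (4 * A (S n))), (int_ev (cr n))]| |].
    + intros t. unfold fN. unfold a_N, b_N. simpl Mprod. unfold M2mul, factor. cbn [m11 m12 m21 m22]. symmetry.
      rewrite alg. destruct (ev_pab n t) as [Ea Eb]. unfold a_N, b_N in Ea, Eb.
      unfold cr. rewrite ev_mul, ev_mul, ev_cj, ev_single, Ea, Eb. unfold fm. rewrite <- INR_IZR_INZ.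
      try reflexivity.
    + rewrite c0_nz by (apply cr_nz; auto). simpl. ring.
Qed.
End Main.

Lemma prodR_sq (A : nat -> R) N : prodR (fun j => A j ^ 2) N = prodR A N ^ 2.
Proof. induction N as [|N IH]. simpl; ring. change (prodR (fun j => A j ^ 2) N * A (S N) ^ 2 = (prodR A N * A (S N)) ^ 2). rewrite IH. ring. Qed.

Theorem lemma2p2 (q : R) (m : nat -> nat) (A : nat -> R) (B : nat -> C) :
  2 <= q ->
  (forall j, (1 <= j)%nat -> (0 < m j)%nat) ->
  (forall j, (1 <= j)%nat -> (m j < m (S j))%nat) ->
  (forall j, (1 <= j)%nat -> q * INR (m j) <= INR (m (S j))) ->
  (forall j, (1 <= j)%nat -> 0 < A j) ->
  (forall j, (1 <= j)%nat -> A j ^ 2 - Cmod (B j) ^ 2 = 1) ->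
  forall N : nat,
    RInt (fun t => Cmod (a_N m A B N t) ^ 2 + Cmod (b_N m A B N t) ^ 2) 0 1
      = prodR (fun j => A j ^ 2 + Cmod (B j) ^ 2) N
    /\
    RInt (fun t => Cmod (a_N m A B N t - RtoC (prodR A N))%C ^ 2
                   + Cmod (b_N m A B N t) ^ 2) 0 1
      = prodR (fun j => A j ^ 2 + Cmod (B j) ^ 2) N
        - prodR (fun j => A j ^ 2) N.
Proof.
  intros Hq Hpos Hinc Hgr _ _ N.
  assert (H1 : (1 <= m 1)%nat) by (apply Hpos; lia).
  assert (H2 : forall k, (2 * m (S k) <= m (S (S k)))%nat).
  { intros k. apply INR_le. rewrite mult_INR. simpl (INR 2).
    assert (Hk := Hgr (S k) ltac:(lia)). assert (P0 := pos_INR (m (S k))).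
    replace (1 + 1) with 2 by ring. nra. }
  assert (Hb : forall n, (Ub m n < fm m (S n))%Z).
  { intros [|k]; unfold Ub, fm; simpl; [lia|]. specialize (H2 k). assert (m (S k) >= 1)%nat by (apply Hpos; lia). lia. }
  assert (Hab : forall n, (Ua m n <= fm m (S n))%Z).
  { intros [|k]; unfold Ua, fm; simpl; [lia|]. specialize (H2 k). lia. }
  assert (Hs : forall n, (Ua m n + Ub m n <= fm m (S n))%Z).
  { intros [|k]; unfold Ua, Ub, fm; simpl; [lia|]. specialize (H2 k). lia. }
  assert (I1 := int_fN m A B N Hb Hab Hs).
  split.
  - apply is_RInt_unique. exact I1.
  - apply is_RInt_unique.
    assert (I2 : is_RInt (fun t => Re (a_N m A B N t)) 0 1 (prodR A N)).
    { eapply RInt_eqv; [apply (int_ev (fst (pab m A B N)))| |].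
      - intros t. destruct (ev_pab m A B N t) as [Ea _]. rewrite Ea. reflexivity.
      - rewrite (c0_pab m A B N Hb Hab). reflexivity. }
    eapply RInt_eqv; [apply RInt_plusR; [apply RInt_plusR; [exact I1 | apply (RInt_scalR (fun t => Re (a_N m A B N t)) (-2 * prodR A N)), I2] | apply (RInt_c01 (prodR A N ^ 2))] | |].
    + intros t. unfold fN. rewrite !Cmod2. destruct (a_N m A B N t) as [x y].
      unfold Cminus, Copp, Cplus, RtoC, Re; simpl. ring.
    + rewrite (prodR_sq A N). match goal with |- ?a = ?b => change (@eq R a b) end; ring.
Qed.
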